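(* Under the setting above, \begin{equation*} \sum_{k = 0}^{1 - a_{\eta\eta'}}(-1)^k\begin{bmatrix} 1 - a_{\eta\eta'} \\ k \end{bmatrix}_{d_{\eta}} \widetilde f_{\eta}^k\widetilde f_{\eta'} \widetilde f_{\eta}^{1-a_{\eta\eta'} - k} = 0 \end{equation*} in $\mathbf{U}_q^-$.
   Context: Let $X = (I, (\ ,\ ))$ be a Cartan datum with Cartan matrix $a_{ij} = 2(\alpha_i,\alpha_j)/(\alpha_i,\alpha_i)$, $d_i = (\alpha_i,\alpha_i)/2$, and let $\mathbf{U}_q^-$ be the $\mathbb{Q}(q)$-algebra generated by $f_i$ ($i \in I$) subject to the quantum Serre relations $\sum_{k=0}^{1-a_{ij}}(-1)^k\begin{bmatrix} 1 - a_{ij} \\ k\end{bmatrix}_{d_i} f_i^k f_j f_i^{1-a_{ij}-k} = 0$ ($i \ne j$), where $[n] = \frac{q^n - q^{-n}}{q - q^{-1}}$, $\begin{bmatrix} n \\ m\end{bmatrix} = \frac{[n]\cdots[n-m+1]}{[m]^!}$ and the subscript $d$ means $q$ is replaced by $q^d$. Let $\sigma$ be an admissible diagram automorphism of $X$ (a permutation of $I$ preserving $(\ ,\ )$ with $(\alpha_i,\alpha_j)=0$ for distinct $i,j$ in the same orbit), $\underline{I}$ the set of $\sigma$-orbits, and $\underline X$ the induced Cartan datum with $(\alpha_\eta,\alpha_\eta)_1 = (\alpha_i,\alpha_i)|\eta|$ ($i \in \eta$), $(\alpha_\eta,\alpha_{\eta'})_1 = \sum_{i\in\eta, j\in\eta'}(\alpha_i,\alpha_j)$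 for $\eta\ne\eta'$, $d_\eta = (\alpha_\eta,\alpha_\eta)_1/2$, $a_{\eta\eta'} = 2(\alpha_\eta,\alpha_{\eta'})_1/(\alpha_\eta,\alpha_\eta)_1$. Fix $\eta \ne \eta' \in \underline{I}$ with $\eta = \{i\}$ a single element and $|\eta'| = n-1$, such that every $j \in \eta'$ is joined to $i$ (i.e. $a_{ij} \ne 0$), with $a_{ij}$ independent of $j \in \eta'$; set $r = 1 - a_{ij}$, so $1 - a_{\eta\eta'} = (n-1)(r-1)+1$ and $d_\eta = d_i$. Put $\widetilde f_\eta = f_i$ and $\widetilde f_{\eta'} = \prod_{j \in \eta'} f_j$. *)

(* Defs.v *)
From HB Require Import structures.
From mathcomp Require Import all_boot all_order.
From mathcomp Require Import fingroup perm.
From mathcomp Require Import all_algebra.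
Set Implicit Arguments. Unset Strict Implicit. Unset Printing Implicit Defensive.
Import Order.TTheory GRing.Theory Num.Theory.
Local Open Scope ring_scope.

Definition Qq : fieldType := {fraction {poly rat}}.
Definition qq : Qq := tofrac ('X : {poly rat}).

Definition qint (d n : nat) : Qq :=
  (qq ^+ (d * n) - qq ^- (d * n)) / (qq ^+ d - qq ^- d).
Definition qfact (d m : nat) : Qq := \prod_(1 <= l < m.+1) qint d l.
Definition qbinom (d n m : nat) : Qq :=
  (\prod_(0 <= l < m) qint d (n - l)) / qfact d m.

Definition cartan_datum (I : finType) (B : I -> I -> int) : Prop :=
  [/\ forall i j, B i j = B j i,
      forall i, (0 < B i i)%R /\ (2 %| B i i)%Z &
      forall i j, i != j -> (B i i %| 2 * B i j)%Z /\ (B i j <= 0)%R].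

Definition cartan_a (I : finType) (B : I -> I -> int) (i j : I) : int :=
  ((2 * B i j) %/ B i i)%Z.
Definition dsym (I : finType) (B : I -> I -> int) (i : I) : nat :=
  `|((B i i) %/ 2)%Z|%N.

Definition serre_rels (I : finType) (B : I -> I -> int) (A : algType Qq)
  (f : I -> A) : Prop :=
  forall i j, i != j ->
    let N := `|1 - cartan_a B i j|%N in
    \sum_(0 <= k < N.+1)
      ((-1) ^+ k * qbinom (dsym B i) N k) *: (f i ^+ k * f j * f i ^+ (N - k)) = 0.

Definition admissible (I : finType) (B : I -> I -> int) (s : {perm I}) : Prop :=
  (forall i j, B (s i) (s j) = B i j) /\
  (forall i j, i != j -> j \in porbit s i -> B i j = 0).

Definition orbit_form_diag (I : finType) (B : I -> I -> int) (i : I) (eta : {set I}) : int :=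
  B i i * (#|eta|%:Z).
Definition orbit_form (I : finType) (B : I -> I -> int) (eta eta' : {set I}) : int :=
  \sum_(i in eta) \sum_(j in eta') B i j.
Definition orbit_cartan_a (I : finType) (B : I -> I -> int) (i : I) (eta eta' : {set I}) : int :=
  ((2 * orbit_form B eta eta') %/ orbit_form_diag B i eta)%Z.
Definition orbit_d (I : finType) (B : I -> I -> int) (i : I) (eta : {set I}) : nat :=
  `|(orbit_form_diag B i eta %/ 2)%Z|%N.

(* Main.v *)
Require Import Defs.
From HB Require Import structures.
From mathcomp Require Import all_boot all_order.
From mathcomp Require Import fingroup perm.
From mathcomp Require Import all_algebra ring zify.
Import GRing.Theory.
Local Open Scope ring_scope.

Lemma qq_neq0 : qq != 0.
Proof. by rewrite /qq tofrac_eq0 polyX_eq0. Qed.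

Lemma qqX_neq1 m : (0 < m)%N -> qq ^+ m != 1.
Proof.
move=> m0; rewrite /qq -tofracXn -tofrac1 tofrac_eq.
apply/eqP=> /(congr1 (fun p : {poly rat} => size p)).
by rewrite size_polyXn size_poly1; case: m m0.
Qed.

Lemma qintE d n : qint d n = ((qq ^+ d) ^+ n - (qq ^+ d) ^- n) / (qq ^+ d - (qq ^+ d)^-1).
Proof. by rewrite /qint !exprM. Qed.

Lemma wpow_neq0 d n : (qq ^+ d) ^+ n != 0.
Proof. by rewrite -exprM expf_neq0 // qq_neq0. Qed.

Lemma num_neq0 d n : (0 < d)%N -> (0 < n)%N -> (qq ^+ d) ^+ n - (qq ^+ d) ^- n != 0.
Proof.
move=> d0 n0; rewrite subr_eq0; apply/negP => /eqP E.
have : ((qq ^+ d) ^+ n) * ((qq ^+ d) ^+ n) = 1.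
  by rewrite {2}E divff // wpow_neq0.
rewrite -exprD -!exprM => /eqP; apply/negP; apply: qqX_neq1.
lia.
Qed.

Lemma qint_neq0 d n : (0 < d)%N -> (0 < n)%N -> qint d n != 0.
Proof.
move=> d0 n0; rewrite qintE; apply: mulf_neq0; first exact: num_neq0.
rewrite invr_eq0; have := @num_neq0 d 1 d0 (ltn0Sn 0); rewrite !expr1; exact.
Qed.

Lemma qfact_neq0 d k : (0 < d)%N -> qfact d k != 0.
Proof.
move=> d0; elim: k => [|k IH].
  rewrite /qfact big_geq; [exact: oner_neq0| by []].
rewrite /qfact big_nat_recr; last by [].
apply: mulf_neq0; [exact: IH | exact: qint_neq0].
Qed.

Lemma qint0 d : qint d 0 = 0.
Proof. by rewrite /qint muln0 expr0 invr1 subrr mul0r. Qed.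

Lemma qbinom_over d M : qbinom d M M.+1 = 0.
Proof. rewrite /qbinom big_nat_recr; last by []. rewrite /= subnn qint0 mulr0 mul0r. by []. Qed.

Lemma qbinom0 d M : qbinom d M 0 = 1.
Proof. rewrite /qbinom big_geq; last by []. rewrite /qfact big_geq; last by []. by rewrite divr1. Qed.

Lemma sub_inv_neq0 (K : fieldType) (x : K) : x - x^-1 != 0 -> (x != 0) && (x * x - 1 != 0).
Proof.
move=> H.
have x0 : x != 0 by apply: contraNneq H => ->; rewrite invr0 subrr.
rewrite x0 /=; apply: contraNneq H => /eqP; rewrite subr_eq0 => /eqP E.
have -> : x^-1 = x by rewrite -[x^-1]mul1r -E mulrK // unitfE.
by rewrite subrr.
Qed.

Lemma pascal_core (K : fieldType) (a b w D F : K) :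
  a != 0 -> b != 0 -> w - w^-1 != 0 -> F != 0 -> a - a^-1 != 0 ->
  (a * b - (a * b)^-1) / (w - w^-1) * D / (F * ((a - a^-1) / (w - w^-1))) =
  b * (D / F) +
  a^-1 * (D * ((b - b^-1) / (w - w^-1)) / (F * ((a - a^-1) / (w - w^-1)))).
Proof.
move=> a0 b0 ww F0 Q.
have /andP[w0 w1] := sub_inv_neq0 _ _ ww.
have /andP[_ a1] := sub_inv_neq0 _ _ Q.
by field; rewrite w0 w1 a0 a1 F0 b0.
Qed.

Lemma qbinom_pascal d M k : (0 < d)%N -> (k <= M)%N ->
  qbinom d M.+1 k.+1 =
    (qq ^+ d) ^+ (M - k) * qbinom d M k + (qq ^+ d) ^- k.+1 * qbinom d M k.+1.
Proof.
move=> d0 kM; rewrite /qbinom.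
rewrite big_nat_recl; last by []. rewrite big_nat_recr; last by [].
rewrite [qfact d k.+1]/qfact big_nat_recr; last by []. rewrite -/(qfact d k).
under eq_bigr => l _ do rewrite subSS.
set D := \prod_(0 <= l < k) _.
have Fk := @qfact_neq0 d k d0.
have Q1 := @qint_neq0 d k.+1 d0 (ltn0Sn k).
move: Q1; rewrite /= !qintE subn0.
have -> : (M.+1 = k.+1 + (M - k))%N by lia.
rewrite exprD.
set w := qq ^+ d.
have w0 : w != 0 by rewrite /w expf_neq0 ?qq_neq0.
have a0 : w ^+ k.+1 != 0 by exact: expf_neq0 w0.
have b0 : w ^+ (M - k) != 0 by exact: expf_neq0 w0.
have ww : w - w^-1 != 0 by have := @num_neq0 d 1 d0 (ltn0Sn 0); rewrite !expr1.
move=> Q1.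
move: Q1 ww a0 b0 Fk.
set a := w ^+ k.+1. set b := w ^+ (M - k). set F := qfact d k.
move=> Q1 ww a0 b0 Fk.
have Q2 : a - a^-1 != 0.
  move: Q1; rewrite mulf_eq0 negb_or => /andP[H _]; exact H.
exact: (@pascal_core Qq a b w D F a0 b0 ww Fk Q2).
Qed.

Set Implicit Arguments. Unset Strict Implicit.

Definition Top (K : fieldType) (A : algType K) (F : A) (c : K) (z : A) : A :=
  F * z - c *: (z * F).

Fixpoint itT (K : fieldType) (A : algType K) (F : A) (al v : K) (n : nat) (z : A) : A :=
  match n with
  | 0 => z
  | n'.+1 => Top F (al * v ^+ n') (itT F al v n' z)
  end.

Lemma Top0 (K : fieldType) (A : algType K) (F : A) c : Top F c 0 = 0.
Proof. by rewrite /Top mulr0 mul0r scaler0 subrr. Qed.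

Lemma TopD (K : fieldType) (A : algType K) (F : A) c x y :
  Top F c (x + y) = Top F c x + Top F c y.
Proof. rewrite /Top mulrDr mulrDl scalerDr; rewrite opprD; rewrite !addrA; congr (_ + _);
  rewrite -!addrA; congr (_ + _); by rewrite addrC. Qed.

Lemma TopZ (K : fieldType) (A : algType K) (F : A) c e x :
  Top F c (e *: x) = e *: Top F c x.
Proof. by rewrite /Top scalerBr -scalerAr -scalerAl !scalerA mulrC. Qed.

Lemma itT_stop (K : fieldType) (A : algType K) (F : A) al v n z :
  itT F al v n z = 0 -> forall m, (n <= m)%N -> itT F al v m z = 0.
Proof.
move=> H m; elim: m => [|m IH]; first by rewrite leqn0 => /eqP E; rewrite -E.
rewrite leq_eqVlt => /orP[/eqP <- // | ]; rewrite ltnS => /IH /= ->.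
exact: Top0.
Qed.

Lemma Top_leib (K : fieldType) (A : algType K) (F : A) (al be v : K) s t (X X1 Y Y1 : A) :
  X1 = Top F (al * v ^+ s) X -> Y1 = Top F (be * v ^+ t) Y ->
  Top F (al * be * v ^+ (s + t)) (X * Y) = X1 * Y + (al * v ^+ s) *: (X * Y1).
Proof.
move=> -> ->; rewrite /Top.
have E : al * be * v ^+ (s + t) = al * v ^+ s * (be * v ^+ t) by rewrite exprD; ring.
rewrite E mulrBl mulrBr scalerBr -!scalerAl -!scalerAr !scalerA !mulrA.
by rewrite addrA subrK.
Qed.

Inductive Gsp (K : fieldType) (A : algType K) (F : A) (al be v : K) (a b : A) (k : nat) : A -> Prop :=
| Gsp0 : Gsp F al be v a b k 0
| GspT s t c : (s + t)%N = k -> Gsp F al be v a b k (c *: (itT F al v s a * itT F be v t b))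
| GspD x y : Gsp F al be v a b k x -> Gsp F al be v a b k y -> Gsp F al be v a b k (x + y).

Lemma Gsp_step (K : fieldType) (A : algType K) (F : A) (al be v : K) (a b : A) k x :
  Gsp F al be v a b k x -> Gsp F al be v a b k.+1 (Top F (al * be * v ^+ k) x).
Proof.
elim=> [|s t c E|x1 y1 _ IH1 _ IH2].
- rewrite Top0; exact: Gsp0.
- rewrite TopZ -E (@Top_leib K A F al be v s t _ (itT F al v s.+1 a) _ (itT F be v t.+1 b)) //.
  rewrite scalerDr scalerA; apply: GspD; apply: GspT; lia.
- rewrite TopD; exact: GspD.
Qed.

Lemma Gsp_it (K : fieldType) (A : algType K) (F : A) (al be v : K) (a b : A) k :
  Gsp F al be v a b k (itT F (al * be) v k (a * b)).
Proof.
elim: k => [|k IH] /=.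
  have -> : a * b = 1 *: (itT F al v 0 a * itT F be v 0 b) by rewrite scale1r.
  exact: GspT.
exact: Gsp_step.
Qed.

Lemma prod_annih (K : fieldType) (A : algType K) (F : A) (al be v : K) (a b : A) r m k :
  itT F al v r a = 0 -> itT F be v m b = 0 -> (r + m)%N = k.+1 ->
  itT F (al * be) v k (a * b) = 0.
Proof.
move=> Ha Hb E; have := Gsp_it F al be v a b k.
elim=> [//|s t c E2|x y _ -> _ ->]; last by rewrite addr0.
have [sr|sr] := leqP r s.
  by rewrite (itT_stop Ha sr) mul0r scaler0.
have tm : (m <= t)%N by lia.
by rewrite (itT_stop Hb tm) mulr0 scaler0.
Qed.

Definition SumB (K : fieldType) (A : algType K) (F : A) (be : nat -> nat -> K) M (t : K) (z : A) : A :=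
  \sum_(k < M.+1) ((-1) ^+ (M - k) * be M k * t ^+ (M - k)) *: (F ^+ k * z * F ^+ (M - k)).

Lemma SumB_step (K : fieldType) (A : algType K) (F : A) (be : nat -> nat -> K) (w : K)
  (Hover : forall M, be M M.+1 = 0) (H0 : forall M, be M 0 = 1)
  (Hp : forall M k, (k <= M)%N -> be M.+1 k.+1 = w ^+ (M - k) * be M k + w ^- k.+1 * be M k.+1)
  (w0 : w != 0) M t z :
  Top F (t / w ^+ M) (SumB F be M (t * w) z) = SumB F be M.+1 t z.
Proof.
set c := t / w ^+ M.
set a := fun k : nat => (-1) ^+ (M - k) * be M k * (t * w) ^+ (M - k).
set a' := fun k : nat => (-1) ^+ (M.+1 - k) * be M.+1 k * t ^+ (M.+1 - k).
set X := fun k : nat => F ^+ k * z * F ^+ (M.+1 - k).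
have E1 : F * SumB F be M (t * w) z = \sum_(k < M.+1) a k *: X k.+1.
  rewrite /SumB mulr_sumr; apply: eq_bigr => k _.
  by rewrite -scalerAr /X subSS !mulrA -exprS.
have E2 : SumB F be M (t * w) z * F = a 0%N *: X 0%N + \sum_(k < M.+1) a k.+1 *: X k.+1.
  rewrite -(big_ord_recl M.+1 (fun k => a k *: X k)) big_ord_recr /=.
  rewrite {2}/a Hover mulr0 mul0r scale0r addr0.
  rewrite /SumB mulr_suml; apply: eq_bigr => k _.
  have kM : (k <= M)%N by rewrite -ltnS ltn_ord.
  rewrite -scalerAl; congr (_ *: _).
  by rewrite /X -!mulrA -exprSr (subSn kM).
have E3 : SumB F be M.+1 t z = a' 0%N *: X 0%N + \sum_(k < M.+1) a' k.+1 *: X k.+1.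
  by rewrite /SumB big_ord_recl.
have ca0 : a' 0%N = - (c * a 0%N).
  rewrite /a' /a /c /= !subn0 !H0 exprMn !exprS.
  have wM : w ^+ M != 0 by rewrite expf_neq0.
  by field.
have cak : forall k, (k < M.+1)%N -> a' k.+1 = a k - c * a k.+1.
  move=> k; rewrite ltnS leq_eqVlt => /orP[/eqP ->|kM].
    rewrite /a' /a /c /= subSS !subnn Hp // subnn Hover.
    have wM : w ^+ M != 0 by rewrite expf_neq0.
    by rewrite !expr0 !(mulr0, mul0r, addr0, subr0, mul1r, mulr1).
  rewrite /a' /a /c /= subSS Hp; last by lia.
  have [j Ej] : exists j, M = (k.+1 + j)%N by exists (M - k.+1)%N; lia.
  rewrite Ej.
  have -> : (k.+1 + j - k = j.+1)%N by lia.
  rewrite addKn !exprS !exprMn exprD.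
  have W1 : w ^+ k.+1 != 0 by rewrite expf_neq0.
  have Wj : w ^+ j != 0 by rewrite expf_neq0.
  have Wk : w ^+ k != 0 by rewrite expf_neq0.
  by field; rewrite Wj Wk w0.
rewrite /Top E1 E2 E3 scalerDr scaler_sumr scalerA ca0 scaleNr.
have -> : \sum_(k < M.+1) a' k.+1 *: X k.+1 =
          \sum_(k < M.+1) a k *: X k.+1 - \sum_(k < M.+1) c *: (a k.+1 *: X k.+1).
  rewrite -sumrB; apply: eq_bigr => k _.
  by rewrite scalerA -scalerBl cak.
by rewrite opprD addrCA.
Qed.

Lemma itT_Sum (K : fieldType) (A : algType K) (F : A) (be : nat -> nat -> K) (w : K)
  (Hover : forall M, be M M.+1 = 0) (H0 : forall M, be M 0 = 1)
  (Hp : forall M k, (k <= M)%N -> be M.+1 k.+1 = w ^+ (M - k) * be M k + w ^- k.+1 * be M k.+1)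
  (w0 : w != 0) M : forall t z,
  itT F (t * w ^+ M.-1) (w ^- 2) M z = SumB F be M t z.
Proof.
elim: M => [|M IH] t z.
  by rewrite /= /SumB big_ord1 /= expr0 H0 !mul1r mulr1 scale1r.
rewrite /=.
have -> : itT F (t * w ^+ M) (w ^- 2) M z = itT F ((t * w) * w ^+ M.-1) (w ^- 2) M z.
  by case: M IH => [|m] IH //=; rewrite exprS mulrA.
rewrite IH -(@SumB_step K A F be w Hover H0 Hp w0); congr Top.
have wM : w ^+ M != 0 by rewrite expf_neq0.
rewrite exprVn -exprM mulnC exprM.
by field.
Qed.

Lemma sign_sum (K : fieldType) (A : algType K) (F : A) (be : nat -> nat -> K) M z :
  SumB F be M 1 z =
  (-1) ^+ M *: \sum_(0 <= k < M.+1) ((-1) ^+ k * be M k) *: (F ^+ k * z * F ^+ (M - k)).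
Proof.
rewrite big_mkord scaler_sumr; apply: eq_bigr => k _.
rewrite scalerA expr1n mulr1; congr (_ *: _).
have kM : (k <= M)%N by rewrite -ltnS ltn_ord.
have s2 : (-1) ^+ k * (-1) ^+ k = 1 :> K.
  by rewrite -expr2 sqrr_sign.
have -> : (-1) ^+ M = (-1) ^+ (M - k) * (-1) ^+ k :> K by rewrite -exprD subnK.
rewrite -mulrA (mulrA ((-1) ^+ k)) s2 mul1r.
by [].
Qed.

Lemma serre_itT (K : fieldType) (A : algType K) (F : A) (be : nat -> nat -> K) (w : K)
  (Hover : forall M, be M M.+1 = 0) (H0 : forall M, be M 0 = 1)
  (Hp : forall M k, (k <= M)%N -> be M.+1 k.+1 = w ^+ (M - k) * be M k + w ^- k.+1 * be M k.+1)
  (w0 : w != 0) M z :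
  \sum_(0 <= k < M.+1) ((-1) ^+ k * be M k) *: (F ^+ k * z * F ^+ (M - k)) = 0 <->
  itT F (w ^+ M.-1) (w ^- 2) M z = 0.
Proof.
rewrite -[w ^+ M.-1]mul1r (@itT_Sum K A F be w Hover H0 Hp w0) sign_sum.
split=> [->|H]; first by rewrite scaler0.
have := congr1 (fun x => (-1) ^+ M *: x) H.
rewrite scalerA -expr2 sqrr_sign scale1r scaler0.
by [].
Qed.

Lemma list_annih (K : fieldType) (A : algType K) (I : eqType) (F : A) (f : I -> A) (w : K) r :
  (0 < r)%N ->
  forall l : seq I, (forall j, j \in l -> itT F (w ^+ r.-1) (w ^- 2) r (f j) = 0) ->
  itT F (w ^+ (r.-1 * size l)) (w ^- 2) (r.-1 * size l).+1 (\prod_(j <- l) f j) = 0.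
Proof.
move=> r0; elim=> [|j l IH] Hl.
  by rewrite big_nil muln0 /= /Top !expr0 !mulr1 !mul1r scale1r subrr.
rewrite big_cons -[size (j :: l)]/((size l).+1).
have -> : w ^+ (r.-1 * (size l).+1) = w ^+ r.-1 * w ^+ (r.-1 * size l).
  by rewrite -exprD mulnS.
apply: (@prod_annih K A F _ _ _ _ _ r (r.-1 * size l).+1).
- by apply: Hl; rewrite mem_head.
- by apply: IH => j' Hj'; apply: Hl; rewrite in_cons Hj' orbT.
- lia.
Qed.


Unset Implicit Arguments.

Lemma qbinom_pascal' d : (0 < d)%N -> forall M k, (k <= M)%N ->
  qbinom d M.+1 k.+1 =
    (qq ^+ d) ^+ (M - k) * qbinom d M k + (qq ^+ d) ^- k.+1 * qbinom d M k.+1.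
Proof. move=> d0 M k kM; exact: (qbinom_pascal d M k d0 kM). Qed.

Lemma w_neq0 d : qq ^+ d != 0.
Proof. apply: expf_neq0; exact: qq_neq0. Qed.

Theorem proposition5p13 (I : finType) (B : I -> I -> int) (s : {perm I})
    (i j0 : I) :
  cartan_datum B -> admissible B s ->
  porbit s i = [set i] ->
  porbit s j0 != porbit s i ->
  (forall j, j \in porbit s j0 -> cartan_a B i j != 0) ->
  (forall j, j \in porbit s j0 -> cartan_a B i j = cartan_a B i j0) ->
  forall (A : algType Qq) (f : I -> A), serre_rels B f ->
  let eta := porbit s i in
  let eta' := porbit s j0 in
  let N := `|1 - orbit_cartan_a B i eta eta'|%N in
  \sum_(0 <= k < N.+1)
     ((-1) ^+ k * qbinom (orbit_d B i eta) N k) *: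
       (f i ^+ k * (\prod_(j in eta') f j) * f i ^+ (N - k)) = 0.
Proof.
move=> HB Hadm Hi Hne Ha0 Haeq A f Hs eta eta' N.
case: HB => Bsym Bdiag Boff.
have [Bii0 Bii2] := Bdiag i.
set d := dsym B i.
have d0 : (0 < d)%N.
  have := divzK Bii2; rewrite /d /dsym => E; lia.
have jnei : forall j, j \in eta' -> i != j.
  move=> j Hj; apply/eqP => E; move: Hj; rewrite -E -eq_porbit_mem eq_sym => H.
  by move: Hne; rewrite H.
set a := cartan_a B i j0.
have Hr : forall j, j \in eta' -> (2 * B i j = a * B i i)%R.
  move=> j Hj; have [Hd _] := Boff i j (jnei j Hj).
  by rewrite /a -(Haeq j Hj) /cartan_a divzK.
have aneg : (a <= 0)%R.
  have Hj0 : j0 \in eta' by exact: porbit_id.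
  have := Hr j0 Hj0; have [_ Hle] := Boff i j0 (jnei j0 Hj0); move=> E; nia.
set r := `|1 - a|%N.
have r0 : (0 < r)%N by rewrite /r; lia.
have Hoa : orbit_cartan_a B i eta eta' = (#|eta'|%:Z * a)%R.
  rewrite /orbit_cartan_a /orbit_form /orbit_form_diag /eta Hi big_set1 cards1 mulr1.
  have -> : (2 * \sum_(j in eta') B i j = #|eta'|%:Z * a * B i i)%R.
    rewrite mulr_sumr (eq_bigr (fun _ => a * B i i)); last by move=> j Hj; exact: Hr.
    by rewrite sumr_const -mulr_natl natz mulrA.
  have Bne : B i i != 0 by lia.
  by rewrite mulzK.
have HN : N = (r.-1 * #|eta'|).+1.
  rewrite /N Hoa /r; nia.
have Hod : orbit_d B i eta = d by rewrite /orbit_d /orbit_form_diag /eta Hi cards1 mulr1.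
rewrite Hod.
have Hover : forall M, qbinom d M M.+1 = 0 by move=> M; exact: qbinom_over.
have H0 : forall M, qbinom d M 0 = 1 by move=> M; exact: qbinom0.
have Hp := qbinom_pascal' d d0.
have w0 := w_neq0 d.
apply/(@serre_itT Qq A (f i) (qbinom d) (qq ^+ d) Hover H0 Hp w0).
have Hj : forall j, j \in eta' -> itT (f i) ((qq ^+ d) ^+ r.-1) ((qq ^+ d) ^- 2) r (f j) = 0.
  move=> j Hj; apply/(@serre_itT Qq A (f i) (qbinom d) (qq ^+ d) Hover H0 Hp w0).
  have S := Hs i j (jnei j Hj).
  move: S; rewrite (Haeq j Hj) -/a -/r -/d => S; exact: S.
rewrite -big_filter.
set l := [seq j <- index_enum I | j \in eta'].
have Hl : size l = #|eta'|.
  rewrite /l deprecated_filter_index_enum -cardE; apply: eq_card => x; by [].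
have := @list_annih Qq A I (f i) f (qq ^+ d) r r0 l.
rewrite Hl HN succnK; apply => j; rewrite mem_filter => /andP[Hj' _]; exact: Hj.
Qed.
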